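(* Let $z\in Z_0$. The element $\tilde z(z)=(\tilde\rho,\tilde v,\tilde m,\tilde\sigma,\tilde p)\in Z$ defined by $\tilde\rho:=1$, $\tilde v:=\frac{m-\rho v}{1-\rho^2}$, $\tilde m:=v-\rho\tilde v$, and $\tilde\sigma+\tilde p\,\mathrm{Id}:=\tilde m\otimes\tilde v+\tilde v\otimes\tilde m$ (i.e. $\tilde\sigma$ is the trace-free part and $\tilde p$ is $\frac1n$ times the trace of the right-hand side) belongs to $\Lambda$, and for every $t\in(-1-\rho,1-\rho)$ there holds $\tilde z(z+t\tilde z(z))=\tilde z(z)$, $T_\pm(z+t\tilde z(z))=T_\pm(z)$, and $M(z+t\tilde z(z))^\circ=M(z)^\circ$.
   Context: Let $n\ge2$, $\mathcal S_0^{n\times n}$ the trace-free symmetric matrices, $Z:=\mathbb{R}\times\mathbb{R}^n\times\mathbb{R}^n\times\mathcal S_0^{n\times n}\times\mathbb{R}$ with elements $z=(\rho,v,m,\sigma,p)$, $Z_0:=\{z:\rho\in(-1,1)\}$. For $z\in Z_0$: $M(z)=\frac{v\otimes v-\rho(m\otimes v+v\otimes m)+m\otimes m}{1-\rho^2}-\sigma$, $T_\pm(z)=\frac{|m\pm v|^2}{n(\rho\pm1)^2}$; for a symmetric matrix $S$, $S^\circ:=S-\frac1n\mathrm{tr}(S)\mathrm{Id}$. Wave cone: $M_\Lambda(\bar z):=\begin{pmatrix}\bar\sigma+\bar p\,\mathrm{Id}&\bar v\\ \bar v^T&0\\ \bar m^T&\bar\rho\end{pmatrix}$, $\Lambda:=\{\bar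 z\in Z:\ker M_\Lambda(\bar z)\ne\{0\},(\bar\rho,\bar v)\ne0\}$. *)

(* Defs.v *)
(* Vectors of R^n are column vectors 'cV[R]_n,
   v \otimes w := v *m w^T. *)
From mathcomp Require Import all_boot all_order all_algebra.
Set Implicit Arguments. Unset Strict Implicit. Unset Printing Implicit Defensive.
Import Order.TTheory GRing.Theory Num.Theory.
Local Open Scope ring_scope.

Section Defs.
Variables (R : realFieldType) (n : nat).

Record Zel := mkZ { zrho : R; zv : 'cV[R]_n; zm : 'cV[R]_n;
                    zsigma : 'M[R]_n; zp : R }.

Definition inZ (z : Zel) : Prop :=
  (zsigma z)^T = zsigma z /\ \tr (zsigma z) = 0.

Definition inZ0 (z : Zel) : Prop := inZ z /\ -1 < zrho z < 1.

Definition tens (a b : 'cV[R]_n) : 'M[R]_n := a *m b^T.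

Definition sqnorm (a : 'cV[R]_n) : R := \sum_i a i 0 ^+ 2.

Definition zadd (z w : Zel) : Zel :=
  mkZ (zrho z + zrho w) (zv z + zv w) (zm z + zm w)
      (zsigma z + zsigma w) (zp z + zp w).

Definition zscale (t : R) (z : Zel) : Zel :=
  mkZ (t * zrho z) (t *: zv z) (t *: zm z) (t *: zsigma z) (t * zp z).

Definition Mfun (z : Zel) : 'M[R]_n :=
  (1 - zrho z ^+ 2)^-1 *:
    (tens (zv z) (zv z) - zrho z *: (tens (zm z) (zv z) + tens (zv z) (zm z))
     + tens (zm z) (zm z)) - zsigma z.

Definition Tplus (z : Zel) : R :=
  sqnorm (zm z + zv z) / (n%:R * (zrho z + 1) ^+ 2).
Definition Tminus (z : Zel) : R :=
  sqnorm (zm z - zv z) / (n%:R * (zrho z - 1) ^+ 2).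

Definition tfree (S : 'M[R]_n) : 'M[R]_n := S - (n%:R^-1 * \tr S)%:M.

Definition MLambda (z : Zel) : 'M[R]_(n + 1 + 1, n + 1) :=
  col_mx (col_mx (row_mx (zsigma z + (zp z)%:M) (zv z))
                 (row_mx (zv z)^T (0 : 'M[R]_1)))
         (row_mx (zm z)^T ((zrho z)%:M : 'M[R]_1)).

Definition inLambda (z : Zel) : Prop :=
  inZ z /\
  (exists x : 'cV[R]_(n + 1), x != 0 /\ MLambda z *m x = 0) /\
  (zrho z != 0 \/ zv z != 0).

Definition ztilde (z : Zel) : Zel :=
  let vt := (1 - zrho z ^+ 2)^-1 *: (zm z - zrho z *: zv z) in
  let mt := zv z - zrho z *: vt in
  let S := tens mt vt + tens vt mt in
  mkZ 1 vt mt (tfree S) (n%:R^-1 * \tr S).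

End Defs.

(* Main.v *)
Require Import Defs.
From mathcomp Require Import all_boot all_order all_algebra.
From mathcomp Require Import ring lra.
Set Implicit Arguments. Unset Strict Implicit.
Import Order.TTheory GRing.Theory Num.Theory.
Local Open Scope ring_scope.

Section Helpers.
Variables (R : realFieldType) (n : nat).

Definition vtf (z : Zel R n) := (1 - zrho z ^+ 2)^-1 *: (zm z - zrho z *: zv z).
Definition mtf (z : Zel R n) := zv z - zrho z *: vtf z.
Definition Sf (z : Zel R n) := tens (mtf z) (vtf z) + tens (vtf z) (mtf z).

Lemma ztildeE z : ztilde z = mkZ 1 (vtf z) (mtf z) (tfree (Sf z)) (n%:R^-1 * \tr (Sf z)).
Proof. by []. Qed.

Lemma tensE (a b : 'cV[R]_n) i j : tens a b i j = a i 0 * b j 0.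
Proof. by rewrite /tens !mxE big_ord1 !mxE. Qed.

Lemma sqnormZ c (a : 'cV[R]_n) : sqnorm (c *: a) = c ^+ 2 * sqnorm a.
Proof. rewrite /sqnorm mulr_sumr; apply: eq_bigr => i _; rewrite mxE; ring. Qed.

Lemma tfree_addscalar (hn : n%:R != 0 :> R) (X : 'M[R]_n) k : tfree (X + k%:M) = tfree X.
Proof.
rewrite /tfree mxtraceD mxtrace_scalar; apply/matrixP => i j; rewrite !mxE.
case: (i == j) => /=; rewrite ?mulr1n ?mulr0n ?addr0 ?subr0 //.
rewrite -mulr_natr; field; exact: hn.
Qed.

Lemma ker_exists (hn : (2 <= n)%N) (a : 'cV[R]_n) :
  exists y : 'cV[R]_n, y != 0 /\ a^T *m y = 0.
Proof.
case: n a hn => [|[|k]] a // _.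
pose i0 : 'I_k.+2 := 0. pose i1 : 'I_k.+2 := 1.
have ne : i0 != i1 by [].
have e01 : (i0 == i1) = false by [].
have e10 : (i1 == i0) = false by [].
have dot : forall y : 'cV[R]_k.+2, y i0 0 * a i0 0 + y i1 0 * a i1 0 = 0 ->
   (forall j, j != i0 -> j != i1 -> y j 0 = 0) -> a^T *m y = 0.
  move=> y h1 h2; apply/matrixP => r c; rewrite !ord1 !mxE (bigD1 i0) //=.
  rewrite (bigD1 i1) //= big1 ?addr0.
    by rewrite !mxE -h1 addrC mulrC [X in _ + X]mulrC addrC.
  by move=> j /andP[h3 h4]; rewrite h2 // mulr0.
case: (eqVneq (a i0 0) 0) => h0.
  exists (delta_mx i0 0); split.
    apply/negP => /eqP/matrixP/(_ i0 0); rewrite !mxE !eqxx /= => /eqP.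
    by rewrite oner_eq0.
  apply: dot; first by rewrite !mxE h0 /= ?eqxx ?e01 ?e10 /= mulr0 mul0r addr0.
  by move=> j hj _; rewrite mxE (negbTE hj).
exists (a i1 0 *: delta_mx i0 0 - a i0 0 *: delta_mx i1 0); split.
  apply/negP => /eqP/matrixP/(_ i1 0); rewrite !mxE !eqxx /= ?e01 ?e10 /=.
  move=> /eqP; rewrite mulr0n mulr1n mulr0 mulr1 sub0r oppr_eq0.
  by rewrite (negbTE h0).
apply: dot; first by rewrite !mxE !eqxx /= ?e01 ?e10 /=; ring.
by move=> j hj hj1; rewrite !mxE (negbTE hj) (negbTE hj1) /=; ring.
Qed.

End Helpers.

Theorem lemma3p9 (R : realFieldType) (n : nat) (hn : (2 <= n)%N)
  (z : Zel R n) (hz : inZ0 z) :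
  inLambda (ztilde z) /\
  forall t : R, -1 - zrho z < t < 1 - zrho z ->
    let w := zadd z (zscale t (ztilde z)) in
    [/\ ztilde w = ztilde z,
        Tplus w = Tplus z, Tminus w = Tminus z &
        tfree (Mfun w) = tfree (Mfun z)].
Proof.
case: hz => [[hsym htr] /andP[hr1 hr2]].
have nz : n%:R != 0 :> R by rewrite pnatr_eq0 -lt0n (leq_trans _ hn).
have hd : 1 - zrho z ^+ 2 != 0 by apply: lt0r_neq0; nra.
have hp : 1 + zrho z != 0 by apply: lt0r_neq0; lra.
have hm : 1 - zrho z != 0 by apply: lt0r_neq0; lra.
split.
  rewrite ztildeE; split; [split|split].
  - rewrite /tfree linearB /= tr_scalar_mx /Sf /tens linearD /= !trmx_mul !trmxK.
    by congr (_ - _); rewrite addrC.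
  - rewrite /= /tfree raddfB /= mxtrace_scalar -mulr_natr; field; exact: nz.
  - have [y [hy0 hy]] := ker_exists hn (vtf z).
    exists (col_mx y (-((mtf z)^T *m y))); split.
      by rewrite col_mx_eq0 negb_and hy0.
    rewrite /MLambda /= !mul_col_mx !mul_row_col.
    have -> : (tfree (Sf z) + (n%:R^-1 * \tr (Sf z))%:M) *m y +
       vtf z *m - ((mtf z)^T *m y) = 0.
      by rewrite /tfree subrK /Sf /tens mulmxDl -!mulmxA hy mulmx0 add0r mulmxN subrr.
    rewrite hy mul0mx addr0 mul_scalar_mx scale1r subrr.
    by rewrite !col_mx0.
  - by left; rewrite oner_neq0.
move=> t /andP[ht1 ht2] w.
have hd' : 1 - (zrho z + t) ^+ 2 != 0 by apply: lt0r_neq0; nra.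
have hp' : zrho z + t + 1 != 0 by apply: lt0r_neq0; lra.
have hm' : zrho z + t - 1 != 0 by apply: ltr0_neq0; lra.
have hvt : vtf w = vtf z.
  apply/matrixP => i j; rewrite /vtf /mtf /w /= !mxE.
  by rewrite mulr1; field; rewrite hd hd'.
have hmt : mtf w = mtf z.
  rewrite /mtf hvt; apply/matrixP => i j; rewrite /w /= !mxE; ring.
have hvE : forall i j, vtf z i j = (1 - zrho z ^+ 2)^-1 * (zm z i j - zrho z * zv z i j).
  by move=> i j; rewrite /vtf !mxE.
have hmE : forall i j, mtf z i j = zv z i j - zrho z * ((1 - zrho z ^+ 2)^-1 * (zm z i j - zrho z * zv z i j)).
  by move=> i j; rewrite /mtf /vtf !mxE.
split.
- by rewrite [ztilde w]ztildeE /Sf hvt hmt.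
- rewrite /Tplus.
  have -> : zm w + zv w = ((zrho z + t + 1) / (1 + zrho z)) *: (zm z + zv z).
    apply/matrixP => i j; rewrite /w /= !mxE ?hvE ?hmE ?mulr1.
    by field; rewrite hd hp.
  rewrite sqnormZ /= ?mulr1.
  have hp2 : zrho z + 1 != 0 by apply: lt0r_neq0; lra.
  by field; rewrite ?nz ?hp ?hp' ?hp2.
- rewrite /Tminus.
  have -> : zm w - zv w = ((zrho z + t - 1) / (zrho z - 1)) *: (zm z - zv z).
    apply/matrixP => i j; rewrite /w /= !mxE ?hvE ?hmE ?mulr1.
    have hm2 : zrho z - 1 != 0 by apply: ltr0_neq0; lra.
    by field; rewrite hd hm2.
  rewrite sqnormZ /= ?mulr1.
  have hm2 : zrho z - 1 != 0 by apply: ltr0_neq0; lra.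
  by field; rewrite ?nz ?hm2 ?hm'.
have -> : Mfun w = Mfun z + (t * (n%:R^-1 * \tr (Sf z)))%:M.
  apply/matrixP => i j; rewrite /Mfun /w /= /tfree /Sf.
  rewrite !mxE !big_ord1 !mxE.
  set T := \tr _.
  case: (i == j); rewrite /= ?mulr1n ?mulr0n ?mulr1; field; rewrite ?hd ?hd' ?nz //.
by rewrite tfree_addscalar.
Qed.
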